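(* Let $m,n\ge1$, let $g_{12}$ be an arbitrary complex $2m\times 2n$ matrix, and put $g_{21}=-U_{2n}J_{2n}g_{12}^{\tau}J_{2m}U_{2m}$ (equivalently, $g_{21}$ is an arbitrary $2n\times2m$ matrix and $g_{12}$ is determined from this relation). Let $G(\lambda)$, $\theta(\lambda)$, $\widehat u(\lambda)$, $u(\mu)$ be as defined in the context. Then, as rational functions of $\lambda=(\lambda_1,\lambda_2)$ and $\mu=(\mu_1,\mu_2)$, $$\mathrm{i}(\lambda_1-\mu_1)^{-1}u(\mu)P_1\widehat u(\lambda)=\mathrm{i}(\lambda_2-\mu_2)^{-1}u(\mu)P_2\widehat u(\lambda),$$ i.e. the function $\omega(\lambda,\mu):=\mathrm{i}(\lambda_p-\mu_p)^{-1}u(\mu)P_p\widehat u(\lambda)$ is the same for $p=1$ and $p=2$.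
   Context: $\mathrm{i}$ is the imaginary unit, $I_r$ the $r\times r$ identity, $\mathbf 1_r$ the all-ones column of length $r$, $^\tau$ transpose. For $N\ge1$, $\mathcal{A}^{(N)}=\{a_{j-\ell}\}_{j,\ell=1}^N$ with $a_r=0$ ($r<0$), $a_0=\mathrm{i}/2$, $a_r=\mathrm{i}$ ($r>0$); $\mathcal A_1=\mathcal A^{(n)}$, $\mathcal A_2=\mathcal A^{(m)}$. $U_{2N}$ is the $2N\times 2N$ matrix with ones on the antidiagonal and zeros elsewhere; $J_{2N}=\mathrm{diag}\{I_N,-I_N\}$. $P_1=\mathrm{diag}\{I_{2m},0_{2n}\}$, $P_2=I_{2(m+n)}-P_1$. $$G(\lambda)=\begin{bmatrix}\mathrm{diag}\{\mathcal A_2-\lambda_2I_m,\mathcal A_2-\lambda_2I_m\}&g_{12}\\ g_{21}&\mathrm{diag}\{\mathcal A_1-\lambda_1I_n,\mathcal A_1-\lambda_1I_n\}\end{bmatrix}.$$ $\theta(\lambda)$ is the polynomial with $\theta^2=\det G$ and coefficient of $\lambda_1^n\lambda_2^m$ equal to $-1$. Then $\widehat u(\lambda)=-\mathrm{i}(\lambda_1-\frac{\mathrm{i}}2)^{-n}(\lambda_2-\frac{\mathrm{i}}2)^{-m}\theta(\lambda)G(\lambda)^{-1}\mathrm{col}[0,\mathbf 1_m,0,\mathbf 1_n]$ (zero blocks of heights $m$ and $n$) and $u(\mu)=\big(\frac{\mu_1-\mathrm{i}/2}{\mu_1+\mathrm{i}/2}\big)^n\big(\frac{\mu_2-\mathrm{i}/2}{\mu_2+\mathrm{i}/2}\big)^m\widehat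 u(\mu)^{\tau}\mathrm{diag}\{J_{2m}U_{2m},J_{2n}U_{2n}\}$. *)

(* Defs.v *)
From HB Require Import structures.
From mathcomp Require Import all_boot all_order all_algebra.
From mathcomp Require Import complex.
From mathcomp Require Import reals.
Set Implicit Arguments. Unset Strict Implicit. Unset Printing Implicit Defensive.
Import Order.TTheory GRing.Theory Num.Theory.
Local Open Scope ring_scope.

Definition iC (R : realType) : R[i] := Complex 0 1.

Definition Amat (R : realType) (N : nat) : 'M[R[i]]_N :=
  \matrix_(j < N, l < N)
     (if (j < l)%N then 0 else if j == l :> nat then iC R / 2 else iC R).

Definition Umat (K : pzRingType) (N : nat) : 'M[K]_(N + N) :=
  \matrix_(j < N + N, l < N + N) (if (j + l == (N + N).-1)%N then 1 else 0).

Definition Jmat (K : pzRingType) (N : nat) : 'M[K]_(N + N) :=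
  block_mx 1%:M 0 0 (- 1%:M).

Definition dblock (K : pzRingType) (N : nat) (X : 'M[K]_N) : 'M[K]_(N + N) :=
  block_mx X 0 0 X.

Definition g21of (K : pzRingType) (m n : nat) (g12 : 'M[K]_(m + m, n + n))
  : 'M[K]_(n + n, m + m) :=
  - (Umat K n *m Jmat K n *m g12^T *m Jmat K m *m Umat K m).

Definition Gmat (K : pzRingType) (m n : nat) (A1 : 'M[K]_n) (A2 : 'M[K]_m)
  (g12 : 'M[K]_(m + m, n + n)) (l1 l2 : K) : 'M[K]_((m + m) + (n + n)) :=
  block_mx (dblock (A2 - l2%:M)) g12 (g21of g12) (dblock (A1 - l1%:M)).

Definition Gc (R : realType) (m n : nat) (g12 : 'M[R[i]]_(m + m, n + n))
  (l1 l2 : R[i]) := Gmat (Amat R n) (Amat R m) g12 l1 l2.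

(* Bivariate polynomials in (lambda1, lambda2): outer variable = lambda1,
   inner variable = lambda2. *)
Definition cst2 (R : realType) (x : R[i]) : {poly {poly R[i]}} := x%:P%:P.
Definition Lam1 (R : realType) : {poly {poly R[i]}} := 'X.
Definition Lam2 (R : realType) : {poly {poly R[i]}} := ('X : {poly R[i]})%:P.

Definition Gpoly (R : realType) (m n : nat) (g12 : 'M[R[i]]_(m + m, n + n)) :=
  Gmat (map_mx (@cst2 R) (Amat R n)) (map_mx (@cst2 R) (Amat R m))
       (map_mx (@cst2 R) g12) (Lam1 R) (Lam2 R).

Definition eval2 (R : realType) (p : {poly {poly R[i]}}) (l1 l2 : R[i]) : R[i] :=
  (p.[l1%:P]).[l2].

Definition coef2 (R : realType) (p : {poly {poly R[i]}}) (a b : nat) : R[i] :=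
  (p`_a)`_b.

Definition ecol (K : pzRingType) (m n : nat) : 'cV[K]_((m + m) + (n + n)) :=
  col_mx (col_mx 0 (const_mx 1)) (col_mx 0 (const_mx 1)).

Definition uhat (R : realType) (m n : nat) (g12 : 'M[R[i]]_(m + m, n + n))
  (theta : {poly {poly R[i]}}) (l1 l2 : R[i]) : 'cV[R[i]]_((m + m) + (n + n)) :=
  (- iC R * (l1 - iC R / 2) ^- n * (l2 - iC R / 2) ^- m * eval2 theta l1 l2)
    *: (invmx (Gc g12 l1 l2) *m ecol _ m n).

Definition urow (R : realType) (m n : nat) (g12 : 'M[R[i]]_(m + m, n + n))
  (theta : {poly {poly R[i]}}) (m1 m2 : R[i]) : 'rV[R[i]]_((m + m) + (n + n)) :=
  (((m1 - iC R / 2) / (m1 + iC R / 2)) ^+ n * ((m2 - iC R / 2) / (m2 + iC R / 2)) ^+ m)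
    *: ((uhat g12 theta m1 m2)^T
        *m block_mx (Jmat _ m *m Umat _ m) 0 0 (Jmat _ n *m Umat _ n)).

Definition P1 (K : pzRingType) (m n : nat) : 'M[K]_((m + m) + (n + n)) :=
  block_mx 1%:M 0 0 0.
Definition P2 (K : pzRingType) (m n : nat) : 'M[K]_((m + m) + (n + n)) :=
  1%:M - P1 K m n.

(* Main.v *)
Require Import Defs.
From HB Require Import structures.
From mathcomp Require Import all_boot all_order all_algebra.
From mathcomp Require Import complex.
From mathcomp Require Import reals.
From mathcomp Require Import zify ring.
Import Order.TTheory GRing.Theory Num.Theory.
Local Open Scope ring_scope.

Section Blocks.
Variable K : comUnitRingType.

Definition ua (N : nat) : 'M[K]_N := \matrix_(i < N, j < N) (if (i + j == N.-1)%N then 1 else 0).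

Lemma ua_mull N p (B : 'M[K]_(N, p)) i k : (ua N *m B) i k = B (rev_ord i) k.
Proof.
rewrite !mxE (bigD1 (rev_ord i)) //= mxE.
have -> : (i + (N - i.+1) == N.-1)%N by apply/eqP; have := ltn_ord i; lia.
rewrite mul1r big1 ?addr0 // => j Hj; rewrite mxE.
case: eqP => [H|]; last by rewrite mul0r.
by case/eqP: Hj; apply/val_inj => /=; move: H; have := ltn_ord i; have := ltn_ord j; lia.
Qed.

Lemma ua_mulr N p (B : 'M[K]_(p, N)) i k : (B *m ua N) i k = B i (rev_ord k).
Proof.
rewrite !mxE (bigD1 (rev_ord k)) //= mxE.
have -> : ((N - k.+1) + k == N.-1)%N by apply/eqP; have := ltn_ord k; lia.
rewrite mulr1 big1 ?addr0 // => j Hj; rewrite mxE.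
case: eqP => [H|]; last by rewrite mulr0.
by case/eqP: Hj; apply/val_inj => /=; move: H; have := ltn_ord k; have := ltn_ord j; lia.
Qed.

Lemma ua_tr N : (ua N)^T = ua N.
Proof. by apply/matrixP => i j; rewrite !mxE addnC. Qed.

Lemma ua_sq N : ua N *m ua N = 1%:M.
Proof.
apply/matrixP => i j; rewrite ua_mull !mxE /=.
have := ltn_ord i; have := ltn_ord j => Hj Hi.
case: (eqVneq i j) => [->|Hij].
  have -> : (N - j.+1 + j == N.-1)%N by apply/eqP; lia.
  by [].
have -> : (N - i.+1 + j == N.-1)%N = false.
  by apply/negbTE/eqP => H; case/eqP: Hij; apply/val_inj => /=; lia.
by [].
Qed.

End Blocks.

Section Blocks2.
Variable K : comUnitRingType.

Lemma Umat_blk N : Umat K N = block_mx 0 (ua K N) (ua K N) 0.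
Proof.
apply/matrixP => i j; rewrite -(splitK i) -(splitK j).
case: (split i) => i'; case: (split j) => j';
rewrite /= ?block_mxEul ?block_mxEur ?block_mxEdl ?block_mxEdr !mxE /=;
have := ltn_ord i'; have := ltn_ord j' => Hj Hi.
- by have -> : (i' + j' == (N + N).-1)%N = false by apply/negbTE/eqP; lia.
- by congr (if _ then _ else _); apply/eqP/eqP; lia.
- by congr (if _ then _ else _); apply/eqP/eqP; lia.
- by have -> : (N + i' + (N + j') == (N + N).-1)%N = false by apply/negbTE/eqP; lia.
Qed.

Definition Wm N : 'M[K]_(N + N) := Jmat K N *m Umat K N.

Lemma Wm_blk N : Wm N = block_mx 0 (ua K N) (- ua K N) 0.
Proof.
rewrite /Wm /Jmat Umat_blk mulmx_block.
by rewrite !mul1mx !mul0mx !mulNmx !mul1mx !addr0 !add0r oppr0.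
Qed.

Lemma UJ N : Umat K N *m Jmat K N = - Wm N.
Proof.
rewrite Wm_blk /Jmat Umat_blk mulmx_block opp_block_mx.
by rewrite !mulmx1 !mulmx0 !mulmxN !mulmx1 !addr0 !add0r !oppr0 opprK.
Qed.

Lemma Wm_tr N : (Wm N)^T = - Wm N.
Proof.
by rewrite Wm_blk tr_block_mx opp_block_mx !trmx0 oppr0 linearN /= ua_tr opprK.
Qed.

Lemma Wm_sq N : Wm N *m Wm N = - 1%:M.
Proof.
rewrite Wm_blk mulmx_block (scalar_mx_block N N) opp_block_mx.
rewrite !mul0mx !mulmx0 !addr0 !add0r mulmxN mulNmx ua_sq oppr0.
done.
Qed.

Lemma Jmat_tr N : (Jmat K N)^T = Jmat K N.
Proof. by rewrite /Jmat tr_block_mx !trmx0 linearN /= trmx1. Qed.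

Lemma Jmat_sq N : Jmat K N *m Jmat K N = 1%:M.
Proof.
rewrite /Jmat mulmx_block (scalar_mx_block N N).
by rewrite !mulmx0 !mul0mx !addr0 !add0r mulmx1 mulNmx mulmxN mul1mx opprK.
Qed.

Lemma g21of_W m n (g : 'M[K]_(m + m, n + n)) : g21of g = Wm n *m g^T *m Wm m.
Proof.
rewrite /g21of -!mulmxA -[Jmat K m *m Umat K m]/(Wm m) !mulmxA UJ.
by rewrite !mulNmx opprK.
Qed.

Lemma Wm_dbl N (X : 'M[K]_N) : ua K N *m X = X^T *m ua K N ->
  Wm N *m dblock X = (dblock X)^T *m Wm N.
Proof.
move=> H; rewrite Wm_blk /dblock tr_block_mx !trmx0 !mulmx_block.
by rewrite !mul0mx !mulmx0 !add0r !addr0 mulNmx H mulmxN.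
Qed.

End Blocks2.

Section Blocks3.
Variable K : comUnitRingType.

Definition Dp m n : 'M[K]_((m + m) + (n + n)) := block_mx (Wm K m) 0 0 (- Wm K n).

Lemma Dp_tr m n : (Dp m n)^T = - Dp m n.
Proof.
rewrite /Dp tr_block_mx !trmx0 linearN /= !Wm_tr opp_block_mx oppr0. by rewrite oppr0.
Qed.

Lemma alg1 m n (Wn : 'M[K]_n) (Wm : 'M[K]_m) (g : 'M[K]_(m, n)) :
  Wn *m Wn = - 1%:M -> Wm^T = - Wm -> Wn^T = - Wn ->
  Wm *m g = - ((Wn *m g^T *m Wm)^T *m Wn).
Proof.
move=> Hn Hmt Hnt; rewrite !trmx_mul trmxK Hmt Hnt.
by rewrite !(mulNmx, mulmxN, opprK) -!mulmxA Hn !(mulNmx, mulmxN, opprK, mulmx1).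
Qed.

Lemma alg2 m n (Wn : 'M[K]_n) (Wm : 'M[K]_m) (g : 'M[K]_(m, n)) :
  Wn *m Wn = - 1%:M -> - (Wn *m (Wn *m g^T *m Wm)) = g^T *m Wm.
Proof. by move=> Hn; rewrite !mulmxA Hn !(mulNmx, mulmxN, opprK, mul1mx). Qed.

Lemma Dp_G m n (A1 : 'M[K]_n) (A2 : 'M[K]_m) g l1 l2 :
  ua K n *m (A1 - l1%:M) = (A1 - l1%:M)^T *m ua K n ->
  ua K m *m (A2 - l2%:M) = (A2 - l2%:M)^T *m ua K m ->
  Dp m n *m Gmat A1 A2 g l1 l2 = (Gmat A1 A2 g l1 l2)^T *m Dp m n.
Proof.
move=> H1 H2; rewrite /Gmat g21of_W /Dp tr_block_mx !mulmx_block.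
rewrite !mul0mx !mulmx0 !addr0 !add0r !mulNmx !mulmxN !Wm_dbl //.
congr block_mx.
  by apply: alg1; rewrite ?Wm_sq ?Wm_tr.
by apply: alg2; rewrite Wm_sq.
Qed.

End Blocks3.

Section Skew.
Variable K : comUnitRingType.
Hypothesis h2 : (2%:R : K) \is a GRing.unit.

Lemma skew_form N (D G : 'M[K]_N) (e : 'cV[K]_N) : G \in unitmx ->
  D^T = - D -> D *m G = G^T *m D -> e^T *m D *m (invmx G *m e) = 0.
Proof.
move=> uG Dt DG.
have E : D *m invmx G = (invmx G)^T *m D.
  rewrite trmx_inv.
  have uGt : G^T \in unitmx by rewrite unitmx_tr.
  apply: (canRL (mulKmx uGt)).
  by rewrite mulmxA -DG -mulmxA mulmxV // mulmx1.
set s := _ *m _.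
have Hs : s^T = - s.
  rewrite /s !trmx_mul trmxK Dt !(mulmxN, mulNmx); congr (- _).
  by rewrite !mulmxA -(mulmxA e^T (invmx G)^T D) -E !mulmxA.
have H1 : s^T = s by apply/matrixP => i j; rewrite !ord1 mxE.
apply/matrixP => i j; rewrite !ord1 [RHS]mxE.
have : s 0 0 + s 0 0 = 0.
  by rewrite -{1}H1 Hs mxE addNr.
rewrite -mulr2n -mulr_natr => H.
by apply: (mulIr h2); rewrite H mul0r.
Qed.

End Skew.


Section Key.
Variable K : comUnitRingType.
Hypothesis h2 : (2%:R : K) \is a GRing.unit.

Lemma Gdiff m n (A1 : 'M[K]_n) (A2 : 'M[K]_m) g l1 l2 mu1 mu2 :
  Gmat A1 A2 g l1 l2 - Gmat A1 A2 g mu1 mu2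
  = block_mx ((mu2 - l2)%:M) 0 0 ((mu1 - l1)%:M).
Proof.
rewrite /Gmat /dblock !(opp_block_mx, add_block_mx) !subrr.
rewrite [in RHS](scalar_mx_block m m) [in RHS](scalar_mx_block n n).
have E N (A : 'M[K]_N) a b : A - a%:M - (A - b%:M) = (b - a)%:M.
  by rewrite [RHS]raddfB /= opprB addrC addrA subrK.
by rewrite !E.
Qed.

Definition Dd m n : 'M[K]_((m + m) + (n + n)) := block_mx (Wm K m) 0 0 (Wm K n).

Lemma P2_blk m n : P2 K m n = block_mx 0 0 0 1%:M.
Proof.
rewrite /P2 /P1 (scalar_mx_block (m + m) (n + n)) opp_block_mx add_block_mx.
by rewrite subrr !oppr0 !addr0.
Qed.

Lemma Dp_delta m n (a b : K) :
  Dp K m n *m block_mx (a%:M) 0 0 (b%:M)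
  = a *: (Dd m n *m P1 K m n) - b *: (Dd m n *m P2 K m n).
Proof.
rewrite P2_blk /Dp /Dd /P1 !mulmx_block !mulmx0 !mul0mx !addr0 !add0r !mulmx1.
rewrite !scale_block_mx opp_block_mx add_block_mx !scaler0 !oppr0 !addr0 !add0r.
by rewrite mul_mx_scalar mulNmx mul_mx_scalar.
Qed.

Lemma key m n (A1 : 'M[K]_n) (A2 : 'M[K]_m) g l1 l2 mu1 mu2 :
  (forall l, ua K n *m (A1 - l%:M) = (A1 - l%:M)^T *m ua K n) ->
  (forall l, ua K m *m (A2 - l%:M) = (A2 - l%:M)^T *m ua K m) ->
  Gmat A1 A2 g l1 l2 \in unitmx -> Gmat A1 A2 g mu1 mu2 \in unitmx ->
  let x := invmx (Gmat A1 A2 g l1 l2) *m ecol K m n in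
  let y := invmx (Gmat A1 A2 g mu1 mu2) *m ecol K m n in
  (mu2 - l2) *: (y^T *m (Dd m n *m P1 K m n) *m x)
  = (mu1 - l1) *: (y^T *m (Dd m n *m P2 K m n) *m x).
Proof.
move=> H1 H2 uGl uGm x y.
have DGl := @Dp_G K m n A1 A2 g l1 l2 (H1 l1) (H2 l2).
have DGm := @Dp_G K m n A1 A2 g mu1 mu2 (H1 mu1) (H2 mu2).
have hx : (ecol K m n)^T *m Dp K m n *m x = 0.
  have := @skew_form K h2 _ _ _ (ecol K m n) uGl (Dp_tr K m n) DGl. done.
have hy : (ecol K m n)^T *m Dp K m n *m y = 0.
  exact: (@skew_form K h2 _ _ _ _ uGm (Dp_tr K m n) DGm).
have ex : Gmat A1 A2 g l1 l2 *m x = ecol K m n := mulKVmx uGl _.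
have ey : Gmat A1 A2 g mu1 mu2 *m y = ecol K m n := mulKVmx uGm _.
have A : y^T *m (Dp K m n *m (Gmat A1 A2 g l1 l2 - Gmat A1 A2 g mu1 mu2)) *m x = 0.
  rewrite mulmxBr mulmxBr mulmxBl.
  have -> : y^T *m (Dp K m n *m Gmat A1 A2 g l1 l2) *m x = 0.
    rewrite -(mulmxA y^T) -(mulmxA (Dp K m n)) ex.
    apply: trmx_inj; rewrite trmx0 trmx_mul trmxK (trmx_mul (Dp K m n)) Dp_tr mulmxN mulNmx.
    by rewrite hy oppr0.
  rewrite DGm (mulmxA y^T) -trmx_mul ey hx subr0 //.
rewrite Gdiff Dp_delta in A.
move: A; rewrite !(mulmxBr, mulmxBl) -!scalemxAr -!scalemxAl => /eqP.
by rewrite subr_eq0 => /eqP ->; rewrite !(mulmxBr, mulmxBl).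
Qed.
End Key.

Section Spec.
Variable R : realType.

Lemma Amat_persym N (l : R[i]) :
  ua _ N *m (Amat R N - l%:M) = (Amat R N - l%:M)^T *m ua _ N.
Proof.
apply/matrixP => i k; rewrite ua_mull ua_mulr !mxE /=.
have Hi := ltn_ord i; have Hk := ltn_ord k.
have e1 : (N - i.+1 < k)%N = (N - k.+1 < i)%N by apply/idP/idP; lia.
have e2 : (N - i.+1 == k)%N = (N - k.+1 == i)%N by apply/eqP/eqP; lia.
have e3 : (rev_ord i == k) = (rev_ord k == i).
  by apply/eqP/eqP => H; apply/val_inj; move/(congr1 val): H => /=; lia.
by rewrite e1 e2 e3.
Qed.

End Spec.

Lemma scal_form (K : comRingType) N (k d c' c : K) (y x : 'cV[K]_N) (D P : 'M[K]_N) :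
  k *: ((d *: ((c' *: y)^T *m D)) *m P *m (c *: x))
  = (k * d * c' * c) *: (y^T *m (D *m P) *m x).
Proof.
have T : (c' *: y)^T = c' *: y^T by apply/matrixP => i j; rewrite !mxE.
rewrite T -(scalemxAl c' y^T D) scalerA -(scalemxAl (d * c')) -(scalemxAr c) -(scalemxAl (d * c')) !scalerA !mulmxA.
congr (_ *: _); rewrite -!mulrA; congr (k * _); by rewrite mulrC -mulrA. Qed.

Lemma scal_fin (F : fieldType) (a k l1 l2 mu1 mu2 : F) :
  l1 - mu1 != 0 -> l2 - mu2 != 0 ->
  a / (l1 - mu1) * k * ((mu1 - l1) / (mu2 - l2)) = a / (l2 - mu2) * k.
Proof.
move=> h1 h2.
have -> : mu1 - l1 = - (l1 - mu1) by rewrite opprB.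
have -> : mu2 - l2 = - (l2 - mu2) by rewrite opprB.
rewrite invrN mulrN mulNr opprK.
rewrite mulrAC -!mulrA; congr (a * _); rewrite mulrC !mulrA mulrC !mulrA.
by rewrite mulVf // mul1r.
Qed.

Lemma scal_fin2 (F : fieldType) (a d c' c l1 l2 mu1 mu2 : F) :
  l1 - mu1 != 0 -> l2 - mu2 != 0 ->
  a / (l1 - mu1) * d * c' * c * ((mu1 - l1) / (mu2 - l2)) = a / (l2 - mu2) * d * c' * c.
Proof.
move=> h1 h2; field.
by rewrite h1 h2 -opprB oppr_eq0 h2.
Qed.

Lemma final (F : fieldType) N (d c' c a l1 l2 mu1 mu2 : F) (y x : 'cV[F]_N)
  (D P1 P2 : 'M[F]_N) :
  l1 - mu1 != 0 -> l2 - mu2 != 0 ->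
  (mu2 - l2) *: (y^T *m (D *m P1) *m x) = (mu1 - l1) *: (y^T *m (D *m P2) *m x) ->
  (a / (l1 - mu1)) *: ((d *: ((c' *: y)^T *m D)) *m P1 *m (c *: x))
  = (a / (l2 - mu2)) *: ((d *: ((c' *: y)^T *m D)) *m P2 *m (c *: x)).
Proof.
move=> d1 d2 Hk; rewrite !scal_form.
have d2'' : mu2 - l2 != 0 by rewrite -opprB oppr_eq0.
have -> : y^T *m (D *m P1) *m x = ((mu1 - l1) / (mu2 - l2)) *: (y^T *m (D *m P2) *m x).
  by rewrite mulrC -scalerA -Hk scalerA mulVf // scale1r.
by rewrite scalerA; congr (_ *: _); apply: scal_fin2.
Qed.

Theorem lemma3p1 (R : realType) (m n : nat) (m_gt0 : (0 < m)%N) (n_gt0 : (0 < n)%N)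
  (g12 : 'M[R[i]]_(m + m, n + n)) (theta : {poly {poly R[i]}})
  (Htheta2 : theta ^+ 2 = \det (Gpoly g12))
  (Hthetac : coef2 theta n m = -1)
  (l1 l2 mu1 mu2 : R[i])
  (Hl1 : l1 != mu1) (Hl2 : l2 != mu2)
  (HGl : \det (Gc g12 l1 l2) != 0) (HGmu : \det (Gc g12 mu1 mu2) != 0)
  (Hl1i : l1 != iC R / 2) (Hl2i : l2 != iC R / 2)
  (Hm1i : mu1 != iC R / 2) (Hm2i : mu2 != iC R / 2)
  (Hm1i' : mu1 != - (iC R / 2)) (Hm2i' : mu2 != - (iC R / 2)) :
  (iC R / (l1 - mu1)) *: (urow g12 theta mu1 mu2 *m P1 _ m n *m uhat g12 theta l1 l2)
  = (iC R / (l2 - mu2)) *: (urow g12 theta mu1 mu2 *m P2 _ m n *m uhat g12 theta l1 l2).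
Proof.
have h2 : (2%:R : R[i]) \is a GRing.unit by rewrite unitfE pnatr_eq0.
have uGl : Gc g12 l1 l2 \in unitmx.
  by rewrite unitmxE unitfE; exact HGl.
have uGm : Gc g12 mu1 mu2 \in unitmx.
  by rewrite unitmxE unitfE; exact HGmu.
rewrite /urow /uhat.
apply: final.
- by rewrite subr_eq0.
- by rewrite subr_eq0.
exact: (@key R[i] h2 m n (Amat R n) (Amat R m) g12 l1 l2 mu1 mu2
  (@Amat_persym R n) (@Amat_persym R m) uGl uGm).
Qed.
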